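(* Let $G=AB$ be a finite group that is the product of subgroups $A$ and $B$, and assume $G$ has a Hall $\pi$-subgroup. If $|x^G|$ is a $\pi$-number for every $\pi$-element $x\in A\cup B$ of prime power order, then $O_\pi(G)$ is a Hall $\pi$-subgroup of $G$. In particular, $G$ is $\pi$-separable.
   Context: $\pi$ is a set of primes; $x^G$ denotes the conjugacy class of $x$ in $G$, so $|x^G|=|G:C_G(x)|$; a $\pi$-number is a positive integer all of whose prime divisors lie in $\pi$; $O_\pi(G)$ is the largest normal $\pi$-subgroup of $G$. *)

(* Defs.v *)
From mathcomp Require Import all_boot all_fingroup all_solvable.
Set Implicit Arguments.
Unset Strict Implicit.
Unset Printing Implicit Defensive.
Local Open Scope group_scope.

Definition pi_sep_step (gT : finGroupType) (pi : nat_pred) (H K : {group gT}) : bool :=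
  (H <| K) && (pi.-group (K / H) || pi^'.-group (K / H)).

Definition pi_separable (gT : finGroupType) (pi : nat_pred) (G : {group gT}) : Prop :=
  exists s : seq {group gT}, path (pi_sep_step pi) 1%G s /\ last 1%G s = G.

(* Main.v *)
From mathcomp Require Import all_boot all_fingroup all_solvable.
Set Implicit Arguments.
Unset Strict Implicit.
Unset Printing Implicit Defensive.
Local Open Scope group_scope.

Lemma key (gT : finGroupType) (pi : nat_pred) (G H : {group gT}) (x : gT) (p : nat) :
  pi.-Hall(G) H -> x \in G -> p.-elt x -> p \in pi -> pi.-nat #|x ^: G| ->
  forall z, z \in G -> x ^ z \in H.
Proof.
move=> hH xG px pip hcl.
have sHG := pHall_sub hH.
have hCH : 'C_G[x] * H = G.
  apply: coprime_index_mulG (subsetIl _ _) sHG _.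
  rewrite index_cent1; apply: pnat_coprime hcl _.
  by case/and3P: hH.
have dec : forall g, g \in G -> x ^ g = x ^ (g * 1).
  by move=> g _; rewrite mulg1.
have red : forall g, g \in G -> exists2 h, h \in H & x ^ g = x ^ h.
  move=> g gG; rewrite -hCH in gG; case/mulsgP: gG => c h cC hH' ->.
  exists h => //; rewrite conjgM; congr (_ ^ _).
  case/setIP: cC => _ /cent1P cx.
  by rewrite /conjg -cx mulKg.
have xH : x \in H.
  have [P sylPH] := Sylow_exists p H.
  have sylPG := subHall_Sylow hH pip sylPH.
  have sxG : <[x]> \subset G by rewrite cycle_subG.
  have [g gG sxP] := Sylow_subJ sylPG sxG px.
  have xHg : x \in H :^ g.
    rewrite cycle_subG in sxP; apply: subsetP (sxP).
    by rewrite conjSg; apply: pHall_sub sylPH.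
  rewrite mem_conjg in xHg.
  have [h hH' e] := red _ (groupVr gG).
  rewrite e in xHg.
  by rewrite -(conjgK h x) groupJ ?groupV.
move=> z zG; have [h hH' ->] := red _ zG.
by rewrite groupJ.
Qed.

Require Import Defs.

Theorem mainTheorem3 (gT : finGroupType) (pi : nat_pred) (G A B : {group gT})
  (hGAB : A * B = G)
  (hHall : exists H : {group gT}, pi.-Hall(G) H)
  (hcls : forall x : gT, x \in A :|: B -> pi.-elt x ->
     (exists p k : nat, prime p /\ #[x] = (p ^ k)%N) ->
     pi.-nat #|x ^: G|) :
  pi.-Hall(G) 'O_pi(G) /\ pi_separable pi G.
Proof.
have sAG : A \subset G by rewrite -hGAB mulG_subl.
have sBG : B \subset G by rewrite -hGAB mulG_subr.
have [H hH] := hHall.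
have inO : forall y, y \in A :|: B -> forall p, prime p -> p \in pi -> p.-elt y ->
    y \in 'O_pi(G).
  move=> y yAB p pp pip py.
  have yG : y \in G.
    by case/setUP: yAB => [/(subsetP sAG) | /(subsetP sBG)].
  have piy : pi.-elt y := pi_pnat py pip.
  have [k ek] := p_natP py.
  have hc := hcls y yAB piy (ex_intro _ p (ex_intro _ k (conj pp ek))).
  apply: (subsetP (pcore_max _ (gcore_normal (pHall_sub hH)))).
    exact: pgroupS (gcore_sub _ _) (pHall_pgroup hH).
  apply/bigcapP => g gG; rewrite mem_conjg.
  exact: key hH yG py pip hc _ (groupVr gG).
have nOG : G \subset 'N('O_pi(G)) := normal_norm (pcore_normal _ _).
have quotO : forall X : {group gT}, X \subset A :|: B -> X \subset G ->
    pi^'.-group (X / 'O_pi(G)).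
  move=> X sX sXG; apply/pgroupP => p pp dvp.
  apply/negP => pip.
  have [u uXO ou] := Cauchy pp dvp.
  case/morphimP: uXO => a aN aX ea.
  have apO : a.`_p \in 'O_pi(G).
    apply: inO pp pip (p_elt_constt _ _).
    have saX : <[a]> \subset X by rewrite cycle_subG.
    exact: (subsetP sX) ((subsetP saX) _ (cycle_constt _ _)).
  have := coset_id apO.
  rewrite (morph_constt (coset_morphism 'O_pi(G)) p aN) /= -ea.
  rewrite constt_p_elt; last by rewrite /p_elt ou pnat_id.
  move=> u1; move: ou; rewrite u1 order1 => p1.
  by move: pp; rewrite -p1.
have piGO : pi^'.-group (G / 'O_pi(G)).
  have nAO : A \subset 'N('O_pi(G)) := subset_trans sAG nOG.
  have eGO : G / 'O_pi(G) = A / 'O_pi(G) * (B / 'O_pi(G)).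
    by rewrite -(quotientMl _ nAO) hGAB.
  rewrite eGO.
  have qA := quotO A (subsetUl _ _) sAG.
  have qB := quotO B (subsetUr _ _) sBG.
  have hm : pi^'.-nat (#|A / 'O_pi(G)| * #|B / 'O_pi(G)|)%N by rewrite pnatM; apply/andP; split.
  rewrite /pgroup; apply: pnat_dvd hm.
  by rewrite (mul_cardG (A / _)%G (B / _)%G) dvdn_mulr.
split.
  rewrite /pHall pcore_sub pcore_pgroup -card_quotient //.
exists [:: 'O_pi(G)%G; G]; split => //=.
rewrite /pi_sep_step normal1 quotient_pgroup ?pcore_pgroup //=.
by rewrite pcore_normal piGO orbT.
Qed.
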